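(* Let $\epsilon>0$, $r>0$, $r_1=(1+\epsilon)r$, let $\alpha$ be a real number with $0<\alpha<1$, and let $N$ be an integer with $N>\frac{5}{\alpha^2\epsilon}$. Then there exist $N$ open subsets $W_1,\dots,W_N$ of $\Delta_{r_1}$ such that $\mathrm{diam}_{r_1}(W_i)\le\alpha$ for every $i$ and $\Delta_r\subset\bigcup_{i=1}^NW_i$.
   Context: $\Delta_\rho$ is the open disk in $\mathbf C$ centered at $0$ of radius $\rho$. On $\Delta_{r_1}$, $d_{r_1}(z,w)=\left|\frac{r_1(z-w)}{r_1^2-z\overline w}\right|$ (a distance), and for $W\subset\Delta_{r_1}$, $\mathrm{diam}_{r_1}(W)=\sup\{d_{r_1}(z,w):z,w\in W\}$. *)

(* Defs.v *)
From Stdlib Require Import Reals.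
From Coquelicot Require Import Coquelicot.
Open Scope R_scope.

Definition disk (rho : R) : C -> Prop := fun z => Cmod z < rho.

Definition dist_r (r1 : R) (z w : C) : R :=
  Cmod ((RtoC r1 * (z - w)) / (RtoC (r1 ^ 2) - z * Cconj w))%C.

Definition diam_r (r1 : R) (W : C -> Prop) : Rbar :=
  Lub_Rbar (fun x => exists z w, W z /\ W w /\ x = dist_r r1 z w).

(* Main.v *)
Require Import Defs.
From Stdlib Require Import Reals Lra Lia Psatz ZArith.
From Coquelicot Require Import Coquelicot.
Open Scope R_scope.

Lemma Cmod_sq (z : C) : Cmod z ^ 2 = fst z ^ 2 + snd z ^ 2.
Proof. rewrite Cmod2_alt. reflexivity. Qed.

Lemma dist_le (r1 al be : R) (z w : C) :
  0 < r1 -> 0 <= al -> Cmod z < r1 -> Cmod w < r1 ->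
  al ^ 2 * (1 + be ^ 2) = be ^ 2 ->
  r1 ^ 2 * Cmod (z - w) ^ 2 <= be ^ 2 * (r1 ^ 2 - Cmod z ^ 2) * (r1 ^ 2 - Cmod w ^ 2) ->
  dist_r r1 z w <= al.
Proof.
  intros Hr Hal Hz Hw Hab H.
  assert (Hz0 := Cmod_ge_0 z). assert (Hw0 := Cmod_ge_0 w).
  set (Y := (r1 ^ 2 - Cmod z ^ 2) * (r1 ^ 2 - Cmod w ^ 2)).
  assert (HY : 0 < Y).
  { unfold Y. apply Rmult_lt_0_compat; nra. }
  set (den := (RtoC (r1 ^ 2) - z * Cconj w)%C).
  assert (Hden : Cmod den ^ 2 = r1 ^ 2 * Cmod (z - w) ^ 2 + Y).
  { unfold Y, den. rewrite !Cmod_sq. destruct z as [a b]; destruct w as [c d].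
    simpl. ring. }
  assert (Hd0 : 0 < Cmod den).
  { assert (0 < Cmod den ^ 2) by (rewrite Hden; assert (H0 := Cmod_ge_0 (z - w)); nra).
    assert (H1 := Cmod_ge_0 den). destruct H1 as [H1|H1]; auto. rewrite <- H1 in H0. lra. }
  unfold dist_r. fold den.
  rewrite Cmod_div.
  2:{ intro E. rewrite E, Cmod_0 in Hd0. lra. }
  rewrite Cmod_mult, Cmod_R. rewrite (Rabs_pos_eq r1) by lra.
  assert (Hzw := Cmod_ge_0 (z - w)).
  apply Rle_div_l; [lra|].
  assert (Hsq : (r1 * Cmod (z - w)) ^ 2 <= (al * Cmod den) ^ 2).
  { rewrite Rpow_mult_distr, Rpow_mult_distr, Hden.
    assert (0 < 1 + be ^ 2) by nra.
    apply Rmult_le_reg_l with (1 + be ^ 2); [lra|].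
    replace ((1 + be ^ 2) * (al ^ 2 * (r1 ^ 2 * Cmod (z - w) ^ 2 + Y)))
      with ((al ^ 2 * (1 + be ^ 2)) * (r1 ^ 2 * Cmod (z - w) ^ 2 + Y)) by ring.
    rewrite Hab. unfold Y. nra. }
  assert (0 <= r1 * Cmod (z - w)) by nra.
  assert (0 <= al * Cmod den) by nra.
  nra.
Qed.




Lemma cell_ineq (z w om : C) (eta : R) :
  0 < Cmod z -> 0 < Cmod w ->
  Cmod (z - Cmod z * om) < eta * Cmod z ->
  Cmod (w - Cmod w * om) < eta * Cmod w ->
  Cmod (z - w) ^ 2 <= (Cmod z - Cmod w) ^ 2 + (2 * eta) ^ 2 * (Cmod z * Cmod w).
Proof.
  intros Hs Ht Hz Hw.
  set (s := Cmod z) in *. set (t := Cmod w) in *.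
  assert (Hid : s * t * Cmod (z - w) ^ 2 =
     s * t * (s - t) ^ 2 + Cmod (t * z - s * w) ^ 2).
  { assert (E1 : s ^ 2 = fst z ^ 2 + snd z ^ 2) by (unfold s; apply Cmod_sq).
    assert (E2 : t ^ 2 = fst w ^ 2 + snd w ^ 2) by (unfold t; apply Cmod_sq).
    rewrite !Cmod_sq. destruct z as [a b]; destruct w as [c d]. simpl in *.
    assert (K : forall X Y, X - Y = 0 -> X = Y) by (intros; lra). apply K.
    transitivity ((s * t - t ^ 2) * (a ^ 2 + b ^ 2 - s ^ 2) + (s * t - s ^ 2) * (c ^ 2 + d ^ 2 - t ^ 2)).
    ring. replace (a ^ 2 + b ^ 2 - s ^ 2) with 0 by (simpl; lra).
    replace (c ^ 2 + d ^ 2 - t ^ 2) with 0 by (simpl; lra). ring. }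
  assert (Hb : Cmod (t * z - s * w) <= 2 * eta * (s * t)).
  { replace (t * z - s * w)%C with (t * (z - s * om) - s * (w - t * om))%C by ring.
    eapply Rle_trans. unfold Cminus. apply Cmod_triangle.
    rewrite Cmod_opp, !Cmod_mult, !Cmod_R. rewrite !Rabs_pos_eq by lra. unfold Cminus in Hz, Hw. nra. }
  assert (H0 := Cmod_ge_0 (t * z - s * w)).
  assert (Cmod (t * z - s * w) ^ 2 <= (2 * eta * (s * t)) ^ 2) by nra.
  assert (0 < s * t) by nra.
  apply Rmult_le_reg_l with (s * t); [lra|]. rewrite Hid. nra.
Qed.


Lemma radial_ineq (T a s t : R) :
  0 < a -> 1 <= T -> s < 1 -> t < 1 ->
  a * (1 - s) < 1 + s -> 1 + s < T * a * (1 - s) ->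
  a * (1 - t) < 1 + t -> 1 + t < T * a * (1 - t) ->
  4 * T * (s - t) ^ 2 <= (T - 1) ^ 2 * ((1 - s ^ 2) * (1 - t ^ 2)).
Proof.
  intros Ha HT Hs Ht h1 h2 h3 h4.
  set (A := (1 + s) * (1 - t)). set (B := (1 + t) * (1 - s)).
  assert (HX : 0 < T * A - B).
  { unfold A, B.
    assert (T * a * (1 - s) * (1 - t) < T * ((1 + s) * (1 - t))).
    { replace (T * ((1 + s) * (1 - t))) with ((T * (1 - t)) * (1 + s)) by ring.
      replace (T * a * (1 - s) * (1 - t)) with ((T * (1 - t)) * (a * (1 - s))) by ring.
      apply Rmult_lt_compat_l; nra. }
    assert ((1 + t) * (1 - s) < T * a * (1 - t) * (1 - s)).
    { apply Rmult_lt_compat_r; lra. }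
    nra. }
  assert (HY : 0 < T * B - A).
  { unfold A, B.
    assert (T * a * (1 - t) * (1 - s) < T * ((1 + t) * (1 - s))).
    { replace (T * ((1 + t) * (1 - s))) with ((T * (1 - s)) * (1 + t)) by ring.
      replace (T * a * (1 - t) * (1 - s)) with ((T * (1 - s)) * (a * (1 - t))) by ring.
      apply Rmult_lt_compat_l; nra. }
    assert ((1 + s) * (1 - t) < T * a * (1 - s) * (1 - t)).
    { apply Rmult_lt_compat_r; lra. }
    nra. }
  assert (E : (T - 1) ^ 2 * ((1 - s ^ 2) * (1 - t ^ 2)) - 4 * T * (s - t) ^ 2
              = (T * A - B) * (T * B - A)) by (unfold A, B; ring).
  assert (0 <= (T * A - B) * (T * B - A)) by nra.
  lra.
Qed.

Lemma ang_ineq (U s : R) :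
  1 <= U -> 0 <= s -> 1 + s <= U * (1 - s) ->
  4 * U * s <= (U ^ 2 - 1) * (1 - s ^ 2).
Proof.
  intros HU Hs H.
  assert (E : (U ^ 2 - 1) * (1 - s ^ 2) - 4 * U * s =
     - (((U + 1) * s - (U - 1)) * ((U - 1) * s + (U + 1)))) by ring.
  assert (((U + 1) * s - (U - 1)) <= 0) by lra.
  assert (0 < ((U - 1) * s + (U + 1))) by nra.
  nra.
Qed.

Lemma ceil_spec (x : R) : 0 < x ->
  x <= INR (Z.to_nat (up x)) <= x + 1 /\ (1 <= Z.to_nat (up x))%nat.
Proof.
  intros Hx. destruct (archimed x) as [h1 h2].
  assert (Hz : (0 < up x)%Z) by (apply lt_IZR; lra).
  rewrite INR_IZR_INZ, Z2Nat.id by lia.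
  split; [lra|lia].
Qed.


Lemma PI_lt : PI < 16/5.
Proof.
  destruct (PI_2_3_7_ineq 1) as [_ H].
  unfold tg_alt, PI_2_3_7_tg, Ratan_seq in H. simpl in H.
  field_simplify in H. lra.
Qed.

Lemma cos_lb2 (d : R) : - PI / 2 <= d -> d <= PI / 2 -> 1 - d ^ 2 / 2 <= cos d.
Proof.
  intros h1 h2. destruct (cos_bound d 0 h1 h2) as [H _].
  unfold cos_approx, cos_term in H. simpl in H. field_simplify in H. lra.
Qed.

Lemma polar (x y : R) : x ^ 2 + y ^ 2 = 1 ->
  exists phi, 0 <= phi <= 2 * PI /\ cos phi = x /\ sin phi = y.
Proof.
  intros H.
  assert (Hx : -1 <= x <= 1) by nra.
  assert (Hs : sin (acos x) = Rabs y).
  { rewrite sin_acos by lra. rewrite <- sqrt_Rsqr_abs. f_equal. unfold Rsqr. nra. }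
  assert (Hc : cos (acos x) = x) by (apply cos_acos; lra).
  destruct (acos_bound x) as [b1 b2].
  destruct (Rle_dec 0 y) as [Hy|Hy].
  - exists (acos x). rewrite Rabs_pos_eq in Hs by lra.
    assert (0 < PI) by apply PI_RGT_0. repeat split; lra.
  - exists (2 * PI - acos x). rewrite Rabs_left in Hs by lra.
    rewrite cos_minus, sin_minus, cos_2PI, sin_2PI, Hc, Hs.
    repeat split; try lra.
Qed.

Lemma angle_cover (m : nat) (x y : R) : (1 <= m)%nat -> x ^ 2 + y ^ 2 = 1 ->
  exists j, (j < m)%nat /\
   (x - cos (2 * PI * INR j / INR m)) ^ 2 + (y - sin (2 * PI * INR j / INR m)) ^ 2
     < (16 / (5 * INR m)) ^ 2.
Proof.
  intros Hm H.
  assert (HPI := PI_lt). assert (HP0 := PI_RGT_0).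
  assert (Hx : -1 <= x <= 1) by nra.
  destruct (Nat.eq_dec m 1) as [E|E].
  { subst m. exists 0%nat. split; [lia|]. simpl.
    replace (2 * PI * 0 / 1) with 0 by field. rewrite cos_0, sin_0.
    nra. }
  assert (Hm2 : 2 <= INR m) by (replace 2 with (INR 2) by (simpl; lra); apply le_INR; lia).
  destruct (polar x y H) as [phi [Hphi [Hc Hs]]].
  assert (Hmi : 0 < / INR m) by (apply Rinv_0_lt_compat; lra).
  assert (Hmi2 : / INR m <= / 2) by (apply Rinv_le_contravar; lra).
  assert (Gen : forall psi, - (PI / INR m) <= phi - psi <= PI / INR m ->
     (x - cos psi) ^ 2 + (y - sin psi) ^ 2 < (16 / (5 * INR m)) ^ 2).
  { intros psi Hd.
    assert (E1 : (x - cos psi) ^ 2 + (y - sin psi) ^ 2 = 2 - 2 * cos (phi - psi)).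
    { rewrite cos_minus, Hc, Hs. assert (K := sin2_cos2 psi). unfold Rsqr in K. nra. }
    rewrite E1.
    assert (Hb : PI / INR m <= PI / 2).
    { unfold Rdiv. apply Rmult_le_compat_l; lra. }
    pose proof (cos_lb2 (phi - psi)).
    assert (Hsq : (phi - psi) ^ 2 <= (PI / INR m) ^ 2).
    { assert (0 <= PI / INR m) by (unfold Rdiv; nra). nra. }
    assert ((PI / INR m) ^ 2 < (16 / (5 * INR m)) ^ 2).
    { replace (16 / (5 * INR m)) with (16 / 5 * / INR m) by (field; lra).
      unfold Rdiv. assert (PI * / INR m < 16 / 5 * / INR m) by (apply Rmult_lt_compat_r; lra).
      assert (0 < PI * / INR m) by nra. nra. }
    assert (1 - (phi - psi) ^ 2 / 2 <= cos (phi - psi)) by (apply H0; lra).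
    lra. }
  set (k := up (phi * INR m / (2 * PI) - / 2)).
  destruct (archimed (phi * INR m / (2 * PI) - / 2)) as [k1 k2]. fold k in k1, k2.
  assert (Hk0 : (0 <= k)%Z).
  { assert (0 <= phi * INR m / (2 * PI)).
    { unfold Rdiv. apply Rmult_le_pos; [nra|]. left; apply Rinv_0_lt_compat; lra. }
    assert (IZR (-1) < IZR k) by (simpl; lra). apply lt_IZR in H1. lia. }
  assert (Hkm : (k <= Z.of_nat m)%Z).
  { assert (phi * INR m / (2 * PI) <= INR m).
    { apply Rle_div_l; [lra|]. nra. }
    assert (IZR k < INR m + 1) by lra.
    assert (IZR k < IZR (Z.of_nat m + 1)) by (rewrite plus_IZR, <- INR_IZR_INZ; simpl; lra).
    apply lt_IZR in H2. lia. }
  assert (Hd : - (PI / INR m) <= phi - 2 * PI * IZR k / INR m <= PI / INR m).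
  { assert (E2 : phi - 2 * PI * IZR k / INR m = (2 * PI / INR m) * (phi * INR m / (2 * PI) - IZR k))
      by (field; lra).
    rewrite E2. assert (0 < 2 * PI / INR m) by (unfold Rdiv; nra).
    split; [|replace (PI / INR m) with (2 * PI / INR m * / 2) by (field; lra); nra].
    replace (- (PI / INR m)) with (2 * PI / INR m * - / 2) by (field; lra). nra. }
  destruct (Z.eq_dec k (Z.of_nat m)) as [Ek|Ek].
  - exists 0%nat. split; [lia|].
    replace (2 * PI * INR 0 / INR m) with 0 by (simpl; field; lra).
    rewrite Ek, <- INR_IZR_INZ in Hd.
    replace (2 * PI * INR m / INR m) with (2 * PI) in Hd by (field; lra).
    specialize (Gen _ Hd). rewrite cos_2PI, sin_2PI in Gen. rewrite cos_0, sin_0. exact Gen.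
  - exists (Z.to_nat k). split; [lia|].
    rewrite INR_IZR_INZ, Z2Nat.id by lia. apply Gen; exact Hd.
Qed.


Lemma Cmod_rev (a b : C) : Rabs (Cmod a - Cmod b) <= Cmod (a - b).
Proof.
  apply Rabs_le.
  assert (H1 := Cmod_triangle (a - b) b). assert (H2 := Cmod_triangle (b - a) a).
  replace (a - b + b)%C with a in H1 by ring. replace (b - a + a)%C with b in H2 by ring.
  replace (b - a)%C with (- (a - b))%C in H2 by ring. rewrite Cmod_opp in H2. lra.
Qed.

Lemma open_lip (f : C -> R) (L : R) : 0 < L ->
  (forall x y, Rabs (f y - f x) <= L * Cmod (y - x)) -> open (fun z => f z < 0).
Proof.
  intros HL Hf z Hz.
  assert (He : 0 < - f z / (2 * L)) by (apply Rdiv_lt_0_compat; lra).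
  exists (mkposreal _ He). intros y Hb.
  assert (H1 := C_NormedModule_mixin_compat2 z y (mkposreal _ He) Hb).
  change (Cmod (y - z) < sqrt 2 * (- f z / (2 * L))) in H1.
  assert (Hs : sqrt 2 < 2).
  { assert (H0 := sqrt_pos 2). assert (H2 := sqrt_sqrt 2 (ltac:(lra))). nra. }
  specialize (Hf z y). apply Rabs_le_between in Hf.
  assert (Cmod (y - z) < 2 * (- f z / (2 * L))).
  { assert (0 <= - f z / (2 * L)) by lra. nra. }
  replace (2 * (- f z / (2 * L))) with (- f z / L) in H by (field; lra).
  assert (L * Cmod (y - z) < - f z).
  { apply Rmult_lt_reg_l with (/ L). apply Rinv_0_lt_compat; lra.
    replace (/ L * (L * Cmod (y - z))) with (Cmod (y - z)) by (field; lra).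
    replace (/ L * - f z) with (- f z / L) by (field; lra). exact H. }
  lra.
Qed.

Lemma open_cmod_gt (c : R) : open (fun z : C => c < Cmod z).
Proof.
  apply (open_ext (fun z => (c - Cmod z) < 0)); [intros; lra|].
  apply (open_lip _ 1); [lra|]. intros x y.
  replace (c - Cmod y - (c - Cmod x)) with (- (Cmod y - Cmod x)) by ring.
  rewrite Rabs_Ropp, Rmult_1_l. apply Cmod_rev.
Qed.

Lemma open_cmod_lt (c : R) : open (fun z : C => Cmod z < c).
Proof.
  apply (open_ext (fun z => (Cmod z - c) < 0)); [intros; lra|].
  apply (open_lip _ 1); [lra|]. intros x y.
  replace (Cmod y - c - (Cmod x - c)) with (Cmod y - Cmod x) by ring.
  rewrite Rmult_1_l. apply Cmod_rev.
Qed.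

Lemma open_ang (om : C) (eta : R) :
  open (fun z : C => Cmod (z - Cmod z * om) < eta * Cmod z).
Proof.
  apply (open_ext (fun z => (Cmod (z - Cmod z * om) - eta * Cmod z) < 0)); [intros; lra|].
  apply (open_lip _ (1 + Cmod om + Rabs eta)).
  { assert (H := Cmod_ge_0 om). assert (H' := Rabs_pos eta). lra. }
  intros x y.
  replace (Cmod (y - Cmod y * om) - eta * Cmod y - (Cmod (x - Cmod x * om) - eta * Cmod x))
    with ((Cmod (y - Cmod y * om) - Cmod (x - Cmod x * om)) + (- eta) * (Cmod y - Cmod x)) by ring.
  eapply Rle_trans. apply Rabs_triang.
  rewrite Rabs_mult, Rabs_Ropp.
  assert (H1 := Cmod_rev (y - Cmod y * om) (x - Cmod x * om)).
  assert (H2 := Cmod_rev y x).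
  replace (y - Cmod y * om - (x - Cmod x * om))%C with ((y - x) + RtoC (- (Cmod y - Cmod x)) * om)%C in H1
    by (rewrite RtoC_opp, RtoC_minus; ring).
  assert (H3 := Cmod_triangle (y - x) (RtoC (- (Cmod y - Cmod x)) * om)).
  rewrite Cmod_mult, Cmod_R, Rabs_Ropp in H3.
  assert (H4 := Cmod_ge_0 om). assert (H5 := Rabs_pos eta).
  assert (H6 := Rabs_pos (Cmod y - Cmod x)).
  assert (Rabs (Cmod y - Cmod x) * Cmod om <= Cmod (y - x) * Cmod om) by (apply Rmult_le_compat_r; lra).
  assert (Rabs eta * Rabs (Cmod y - Cmod x) <= Rabs eta * Cmod (y - x)) by (apply Rmult_le_compat_l; lra).
  nra.
Qed.


Lemma bernoulli (q : R) (n : nat) : 1 <= q -> 1 + INR n * (q - 1) <= q ^ n.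
Proof.
  intros Hq. induction n as [|n IH]; [simpl; lra|].
  rewrite S_INR. change (q ^ S n) with (q * q ^ n). assert (1 <= q ^ n) by (apply pow_R1_Rle; lra). nra.
Qed.

Lemma exists_K (P q T : R) : 1 < q -> 0 < T -> 0 < P ->
  exists K : nat, P / q ^ K <= T /\ (K = 0%nat \/ T / q < P / q ^ K).
Proof.
  intros Hq HT HP.
  assert (Hn : exists n, P <= T * q ^ n).
  { destruct (INR_unbounded (P / (T * (q - 1)))) as [n Hn].
    exists n. assert (H := bernoulli q n ltac:(lra)).
    assert (P / (T * (q - 1)) * (T * (q - 1)) = P) by (field; lra).
    assert (0 < T * (q - 1)) by nra.
    assert (P < INR n * (T * (q - 1))).
    { rewrite <- H0. apply Rmult_lt_compat_r; lra. }
    nra. }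
  destruct Hn as [n Hn]. revert Hn. induction n as [|n IH]; intros Hn.
  - exists 0%nat. simpl. split; [|left; reflexivity]. simpl in Hn. unfold Rdiv. lra.
  - destruct (Rle_dec P (T * q ^ n)) as [h|h]; [apply IH; exact h|].
    exists (S n). assert (0 < q ^ n) by (apply pow_lt; lra).
    assert (0 < q ^ S n) by (apply pow_lt; lra).
    split.
    + apply Rmult_le_reg_r with (q ^ S n); [lra|].
      replace (P / q ^ S n * q ^ S n) with P by (field; lra).
      change (q ^ S n) with (q * q ^ n) in *. nra.
    + right. change (q ^ S n) with (q * q ^ n) in *. apply Rmult_lt_reg_r with (q * q ^ n); [nra|].
      replace (P / (q * q ^ n) * (q * q ^ n)) with P by (field; lra).
      replace (T / q * (q * q ^ n)) with (T * q ^ n) by (field; lra). lra.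
Qed.

Lemma find_layer (B0 q P : R) (K : nat) : 0 < B0 -> 1 < q ->
  B0 <= P -> P < B0 * q ^ K ->
  exists n, (n < K)%nat /\ B0 * q ^ n <= P /\ P < B0 * q ^ (S n).
Proof.
  intros HB Hq H1. induction K as [|K IH]; intros H2.
  - simpl in H2. lra.
  - destruct (Rlt_dec P (B0 * q ^ K)) as [h|h].
    + destruct (IH h) as [n [? ?]]. exists n. split; [lia|auto].
    + exists K. split; [lia|]. split; [lra|auto].
Qed.

Fixpoint off (m : nat -> nat) (n : nat) : nat :=
  match n with O => O | S k => (off m k + m k)%nat end.

Lemma off_mono (m : nat -> nat) (n n' : nat) : (n <= n')%nat -> (off m n <= off m n')%nat.
Proof.
  induction 1; [lia|]. simpl. lia.
Qed.

Lemma off_inj (m : nat -> nat) (n n' j j' : nat) :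
  (j < m n)%nat -> (j' < m n')%nat -> (off m n + j = off m n' + j')%nat ->
  n = n' /\ j = j'.
Proof.
  intros h1 h2 E.
  destruct (Nat.lt_trichotomy n n') as [h|[h|h]].
  - assert (H := off_mono m (S n) n' h). simpl in H. lia.
  - subst. lia.
  - assert (H := off_mono m (S n') n h). simpl in H. lia.
Qed.

Lemma off_count (m : nat -> nat) (B : nat -> R) (c : R) (K : nat) :
  (forall n, (n < K)%nat -> INR (m n) <= c * (B (S n) - B n)) ->
  forall n, (n <= K)%nat -> INR (off m n) <= c * (B n - B 0%nat).
Proof.
  intros H n. induction n as [|n IH]; intros Hn.
  - simpl. lra.
  - simpl. rewrite plus_INR. specialize (IH ltac:(lia)). specialize (H n ltac:(lia)). lra.
Qed.


Lemma poly_pos (x : R) : 0 <= x ->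
  0 < 500 - 30 * x - 328 * x ^ 2 + 1248 * x ^ 3 + 1539 * x ^ 4 + 993 / 2 * x ^ 5.
Proof.
  intros Hx.
  assert (H1 : 0 <= x * (x - 1/8) ^ 2) by (apply Rmult_le_pos; [nra|apply pow2_ge_0]).
  assert (H2 : 0 <= x ^ 2 * (x - 1/8) ^ 2) by (apply Rmult_le_pos; [nra|apply pow2_ge_0]).
  assert (0 <= x ^ 4) by nra. assert (0 <= x ^ 5) by nra.
  nra.
Qed.

Lemma param_ineq (T : R) : 1 < T ->
  let be := (T ^ 2 - 1) / (2 * T) in
  let nu := 1 + be / 100 in
  let al := (T ^ 2 - 1) / (T ^ 2 + 1) in
  (37 / 5 * T / (4 * be) + nu) * al ^ 2 <= 5 / 2 * (T - nu).
Proof.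
  intros HT be nu al.
  assert (E1 : (37 / 5 * T / (4 * be) + nu) * al ^ 2 =
    (100 * (37/5) * T ^ 3 * (T ^ 2 - 1) + (200 * T + T ^ 2 - 1) * (T ^ 2 - 1) ^ 2)
    / (200 * T * (T ^ 2 + 1) ^ 2)).
  { unfold al, nu, be. field. repeat split; nra. }
  assert (E2 : 5 / 2 * (T - nu) =
    (5 / 2 * (T ^ 2 + 1) ^ 2 * (T - 1) * (199 * T - 1)) / (200 * T * (T ^ 2 + 1) ^ 2)).
  { unfold nu, be. field. nra. }
  rewrite E1, E2.
  assert (D : 0 < 200 * T * (T ^ 2 + 1) ^ 2) by (apply Rmult_lt_0_compat; nra).
  unfold Rdiv. apply Rmult_le_compat_r; [left; apply Rinv_0_lt_compat; lra|].
  set (x := T - 1).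
  assert (Hx : 0 <= x) by (unfold x; lra).
  assert (Q : 5 / 2 * (T ^ 2 + 1) ^ 2 * x * (199 * T - 1) -
    (100 * (37/5) * T ^ 3 * (T ^ 2 - 1) + (200 * T + T ^ 2 - 1) * (T ^ 2 - 1) ^ 2)
    = x * (500 - 30 * x - 328 * x ^ 2 + 1248 * x ^ 3 + 1539 * x ^ 4 + 993 / 2 * x ^ 5)).
  { unfold x. field. }
  assert (H := poly_pos x Hx).
  assert (0 <= x * (500 - 30 * x - 328 * x ^ 2 + 1248 * x ^ 3 + 1539 * x ^ 4 + 993 / 2 * x ^ 5))
    by (apply Rmult_le_pos; lra).
  lra.
Qed.


Lemma cell_real (T a0 s t eta Sn be : R) :
  1 < T -> 0 < a0 -> 0 <= s -> s < 1 -> 0 <= t -> t < 1 ->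
  a0 * (1 - s) < 1 + s -> 1 + s < T * a0 * (1 - s) ->
  a0 * (1 - t) < 1 + t -> 1 + t < T * a0 * (1 - t) ->
  0 <= Sn -> s <= Sn * (1 - s ^ 2) -> t <= Sn * (1 - t ^ 2) ->
  (2 * eta) ^ 2 * Sn ^ 2 <= (32 / 37) ^ 2 * be ^ 2 ->
  be = (T ^ 2 - 1) / (2 * T) ->
  (s - t) ^ 2 + (2 * eta) ^ 2 * (s * t) <= be ^ 2 * ((1 - s ^ 2) * (1 - t ^ 2)).
Proof.
  intros HT Ha hs1 hs2 ht1 ht2 h1 h2 h3 h4 HS Hs Ht Heta Hbe.
  assert (Rd := radial_ineq T a0 s t Ha ltac:(lra) hs2 ht2 h1 h2 h3 h4).
  set (Y := (1 - s ^ 2) * (1 - t ^ 2)) in *.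
  assert (HY : 0 < Y) by (unfold Y; apply Rmult_lt_0_compat; nra).
  assert (Hst : s * t <= Sn ^ 2 * Y).
  { unfold Y. replace (Sn ^ 2 * ((1 - s ^ 2) * (1 - t ^ 2))) with
      ((Sn * (1 - s ^ 2)) * (Sn * (1 - t ^ 2))) by ring.
    apply Rmult_le_compat; lra. }
  assert (H2e : 0 <= (2 * eta) ^ 2) by apply pow2_ge_0.
  assert (Hb1 : (2 * eta) ^ 2 * (s * t) <= (32 / 37) ^ 2 * be ^ 2 * Y).
  { eapply Rle_trans. apply Rmult_le_compat_l; [exact H2e|exact Hst].
    replace ((2 * eta) ^ 2 * (Sn ^ 2 * Y)) with (((2 * eta) ^ 2 * Sn ^ 2) * Y) by ring.
    apply Rmult_le_compat_r; lra. }
  assert (Hc1 : (T - 1) ^ 2 <= T * be ^ 2).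
  { rewrite Hbe. replace (T * ((T ^ 2 - 1) / (2 * T)) ^ 2) with ((T ^ 2 - 1) ^ 2 / (4 * T)) by (field; lra).
    apply Rmult_le_reg_r with (4 * T); [lra|].
    replace ((T ^ 2 - 1) ^ 2 / (4 * T) * (4 * T)) with ((T ^ 2 - 1) ^ 2) by (field; lra).
    replace ((T ^ 2 - 1) ^ 2) with ((T - 1) ^ 2 * (T + 1) ^ 2) by ring.
    assert (0 <= (T - 1) ^ 2) by apply pow2_ge_0.
    assert (4 * T <= (T + 1) ^ 2) by nra. nra. }
  assert (Hr : 4 * T * (s - t) ^ 2 <= T * be ^ 2 * Y).
  { eapply Rle_trans; [exact Rd|]. apply Rmult_le_compat_r; lra. }
  assert (Hr2 : (s - t) ^ 2 <= be ^ 2 * Y / 4).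
  { apply Rmult_le_reg_l with (4 * T); [lra|].
    replace (4 * T * (be ^ 2 * Y / 4)) with (T * be ^ 2 * Y) by field. exact Hr. }
  assert (0 <= be ^ 2 * Y) by (apply Rmult_le_pos; [apply pow2_ge_0|lra]).
  lra.
Qed.

Lemma centre_real (T s t : R) :
  1 < T -> 0 <= s -> 0 <= t -> s < (T - 1) / (T + 1) -> t < (T - 1) / (T + 1) ->
  (s + t) ^ 2 <= ((T ^ 2 - 1) / (2 * T)) ^ 2 * ((1 - s ^ 2) * (1 - t ^ 2)).
Proof.
  intros HT hs ht h1 h2.
  set (h := (T - 1) / (T + 1)) in *.
  assert (Hh : 0 < h < 1).
  { unfold h. split. apply Rdiv_lt_0_compat; lra.
    apply Rmult_lt_reg_r with (T + 1); [lra|]. unfold Rdiv. rewrite Rmult_assoc, Rinv_l by lra. lra. }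
  assert (E : (T ^ 2 - 1) / (2 * T) * (1 - h ^ 2) = 2 * h) by (unfold h; field; lra).
  set (be := (T ^ 2 - 1) / (2 * T)) in *.
  assert (Hbe : 0 < be) by (unfold be; apply Rdiv_lt_0_compat; nra).
  assert (H1 : (1 - h ^ 2) ^ 2 <= (1 - s ^ 2) * (1 - t ^ 2)).
  { replace ((1 - h ^ 2) ^ 2) with ((1 - h ^ 2) * (1 - h ^ 2)) by ring.
    apply Rmult_le_compat; nra. }
  assert (H2 : (s + t) ^ 2 <= (2 * h) ^ 2) by nra.
  rewrite <- E in H2.
  replace ((be * (1 - h ^ 2)) ^ 2) with (be ^ 2 * (1 - h ^ 2) ^ 2) in H2 by ring.
  assert (0 <= be ^ 2) by apply pow2_ge_0.
  nra.
Qed.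

Lemma sig_gt (x s : R) : 0 < x + 1 -> (x - 1) / (x + 1) < s -> x * (1 - s) < 1 + s.
Proof.
  intros Hx H. apply Rmult_lt_compat_r with (r := x + 1) in H; [|lra].
  replace ((x - 1) / (x + 1) * (x + 1)) with (x - 1) in H by (field; lra). nra.
Qed.

Lemma sig_lt (x s : R) : 0 < x + 1 -> s < (x - 1) / (x + 1) -> 1 + s < x * (1 - s).
Proof.
  intros Hx H. apply Rmult_lt_compat_r with (r := x + 1) in H; [|lra].
  replace ((x - 1) / (x + 1) * (x + 1)) with (x - 1) in H by (field; lra). nra.
Qed.

Lemma sig_gt_rev (x s : R) : 0 < x + 1 -> x * (1 - s) < 1 + s -> (x - 1) / (x + 1) < s.
Proof.
  intros Hx H. apply Rmult_lt_reg_r with (x + 1); [lra|].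
  replace ((x - 1) / (x + 1) * (x + 1)) with (x - 1) by (field; lra). nra.
Qed.

Lemma sig_lt_rev (x s : R) : 0 < x + 1 -> 1 + s < x * (1 - s) -> s < (x - 1) / (x + 1).
Proof.
  intros Hx H. apply Rmult_lt_reg_r with (x + 1); [lra|].
  replace ((x - 1) / (x + 1) * (x + 1)) with (x - 1) by (field; lra). nra.
Qed.

Lemma sig_lt1 (x : R) : 0 < x + 1 -> (x - 1) / (x + 1) < 1.
Proof.
  intros Hx. apply Rmult_lt_reg_r with (x + 1); [lra|].
  replace ((x - 1) / (x + 1) * (x + 1)) with (x - 1) by (field; lra). lra.
Qed.


Lemma scale_ok (r1 be a b d X : R) : 0 < r1 ->
  d ^ 2 <= r1 ^ 2 * X ->
  X <= be ^ 2 * ((1 - (a / r1) ^ 2) * (1 - (b / r1) ^ 2)) ->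
  r1 ^ 2 * d ^ 2 <= be ^ 2 * (r1 ^ 2 - a ^ 2) * (r1 ^ 2 - b ^ 2).
Proof.
  intros Hr H1 H2.
  assert (E : be ^ 2 * (r1 ^ 2 - a ^ 2) * (r1 ^ 2 - b ^ 2) =
     r1 ^ 4 * (be ^ 2 * ((1 - (a / r1) ^ 2) * (1 - (b / r1) ^ 2)))) by (field; lra).
  rewrite E.
  assert (0 < r1 ^ 2) by nra. assert (0 < r1 ^ 4) by nra.
  apply Rle_trans with (r1 ^ 2 * (r1 ^ 2 * X)).
  - apply Rmult_le_compat_l; lra.
  - replace (r1 ^ 2 * (r1 ^ 2 * X)) with (r1 ^ 4 * X) by ring.
    apply Rmult_le_compat_l; lra.
Qed.

Lemma div_lt_l (r y a : R) : 0 < r -> r * y < a -> y < a / r.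
Proof. intros H1 H2. apply Rmult_lt_reg_r with r; [lra|]. replace (a / r * r) with a by (field; lra). lra. Qed.

Lemma div_lt_r (r y a : R) : 0 < r -> a < r * y -> a / r < y.
Proof. intros H1 H2. apply Rmult_lt_reg_r with r; [lra|]. replace (a / r * r) with a by (field; lra). lra. Qed.

Theorem mainTheorem12 (eps r alpha : R) (N : nat) :
  0 < eps -> 0 < r -> 0 < alpha -> alpha < 1 ->
  INR N > 5 / (alpha ^ 2 * eps) ->
  let r1 := (1 + eps) * r in
  exists W : nat -> C -> Prop,
    (forall i, (i < N)%nat ->
       open (W i) /\ (forall z, W i z -> disk r1 z) /\
       Rbar_le (diam_r r1 (W i)) (Finite alpha)) /\
    (forall z, disk r z -> exists i, (i < N)%nat /\ W i z).
Proof.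
  intros Heps Hr Hal0 Hal1 HN r1.
  assert (Hr1 : 0 < r1) by (unfold r1; nra).
  assert (Hrr1 : r = r1 / (1 + eps)) by (unfold r1; field; lra).
  set (T := sqrt ((1 + alpha) / (1 - alpha))).
  assert (HT2 : T ^ 2 = (1 + alpha) / (1 - alpha)).
  { unfold T. simpl. rewrite Rmult_1_r. apply sqrt_sqrt.
    apply Rlt_le, Rdiv_lt_0_compat; lra. }
  assert (HT : 1 < T).
  { assert (0 <= T) by apply sqrt_pos.
    assert (1 < (1 + alpha) / (1 - alpha)).
    { apply Rmult_lt_reg_r with (1 - alpha); [lra|].
      replace ((1 + alpha) / (1 - alpha) * (1 - alpha)) with (1 + alpha) by (field; lra). lra. }
    nra. }
  assert (Hal : alpha = (T ^ 2 - 1) / (T ^ 2 + 1)).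
  { rewrite HT2. field. lra. }
  set (be := (T ^ 2 - 1) / (2 * T)).
  assert (Hbe : 0 < be) by (unfold be; apply Rdiv_lt_0_compat; nra).
  assert (Hab : alpha ^ 2 * (1 + be ^ 2) = be ^ 2).
  { rewrite Hal. unfold be. field. nra. }
  set (nu := 1 + be / 100).
  assert (Hnu : 1 < nu) by (unfold nu; lra).
  set (q := T / nu).
  assert (HTnu : nu < T).
  { assert (E : T - nu = (T - 1) * (199 * T - 1) / (200 * T)) by (unfold nu, be; field; lra).
    assert (0 < (T - 1) * (199 * T - 1) / (200 * T)).
    { apply Rdiv_lt_0_compat; nra. }
    lra. }
  assert (Hq : 1 < q).
  { unfold q. apply Rmult_lt_reg_r with nu; [lra|].
    replace (T / nu * nu) with T by (field; lra). lra. }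
  set (Pr := 1 + 2 / eps).
  assert (HPr : 1 < Pr) by (unfold Pr; assert (0 < 2 / eps) by (apply Rdiv_lt_0_compat; lra); lra).
  destruct (exists_K Pr q T Hq ltac:(lra) ltac:(lra)) as [K [HK1 HK2]].
  set (B0 := Pr / q ^ K).
  set (B := fun n : nat => B0 * q ^ n).
  assert (HqK : 0 < q ^ K) by (apply pow_lt; lra).
  assert (HBK : B K = Pr) by (unfold B, B0; field; lra).
  assert (HB0pos : 0 < B0) by (unfold B0; apply Rdiv_lt_0_compat; lra).
  assert (Hlay : (0 < K)%nat -> nu < B0).
  { intros HK. destruct HK2 as [HK2|HK2]; [lia|].
    replace nu with (T / q) by (unfold q; field; lra). exact HK2. }
  assert (HBn : forall n, (0 < K)%nat -> nu < B n).
  { intros n HK. unfold B. specialize (Hlay HK).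
    assert (1 <= q ^ n) by (apply pow_R1_Rle; lra). nra. }
  assert (HBS : forall n, B (S n) = B n * q) by (intros; unfold B; simpl; ring).
  set (A := 37 / 5 / be).
  assert (HA : 0 < A) by (unfold A; apply Rdiv_lt_0_compat; lra).
  set (Sn := fun n : nat => (B (S n) ^ 2 - 1) / (4 * B (S n))).
  set (m := fun n : nat => Z.to_nat (up (A * Sn n))).
  assert (HSn : forall n, (n < K)%nat -> 0 < Sn n /\ Sn n <= B n * q / 4).
  { intros n Hn. assert (H1 := HBn (S n) ltac:(lia)). unfold Sn. rewrite HBS in *.
    split. apply Rdiv_lt_0_compat; nra.
    apply Rmult_le_reg_r with (4 * (B n * q)); [lra|].
    assert (0 < B n * q) by nra.
    replace (((B n * q) ^ 2 - 1) / (4 * (B n * q)) * (4 * (B n * q))) with ((B n * q) ^ 2 - 1) by (field; repeat split; nra).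
    nra. }
  assert (Hm : forall n, (n < K)%nat -> A * Sn n <= INR (m n) <= A * Sn n + 1 /\ (1 <= m n)%nat).
  { intros n Hn. apply ceil_spec. destruct (HSn n Hn). nra. }
  set (c := (A * q / 4 + 1) / (q - 1)).
  assert (Hcount : INR (off m K) <= c * (B K - B 0%nat)).
  { apply (off_count m B c K); [|lia].
    intros n Hn. destruct (Hm n Hn) as [[h1 h2] _]. destruct (HSn n Hn) as [h3 h4].
    assert (h5 := HBn n ltac:(lia)).
    rewrite HBS. unfold c.
    replace ((A * q / 4 + 1) / (q - 1) * (B n * q - B n)) with ((A * q / 4 + 1) * B n) by (field; lra).
    nra. }
  assert (Hc : c * alpha ^ 2 <= 5 / 2).
  { assert (E : c = (37 / 5 * T / (4 * be) + nu) / (T - nu)).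
    { unfold c, A, q. field. repeat split; try lra. }
    assert (HP := param_ineq T HT). cbv zeta in HP. fold be in HP. fold nu in HP.
    rewrite <- Hal in HP. rewrite E.
    replace ((37 / 5 * T / (4 * be) + nu) / (T - nu) * alpha ^ 2) with
      (((37 / 5 * T / (4 * be) + nu) * alpha ^ 2) / (T - nu)) by (field; lra).
    apply Rmult_le_reg_r with (T - nu); [lra|].
    replace ((37 / 5 * T / (4 * be) + nu) * alpha ^ 2 / (T - nu) * (T - nu)) with
      ((37 / 5 * T / (4 * be) + nu) * alpha ^ 2) by (field; lra). lra. }
  assert (HNoff : (off m K < N)%nat).
  { apply INR_lt.
    destruct (Nat.eq_dec K 0) as [E|E].
    - rewrite E. simpl. assert (0 < 5 / (alpha ^ 2 * eps)).
      { apply Rdiv_lt_0_compat; [lra|]. apply Rmult_lt_0_compat; nra. } lra.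
    - assert (h := Hlay ltac:(lia)).
      rewrite HBK in Hcount. change (B 0%nat) with (B0 * 1) in Hcount.
      assert (Hc0 : 0 <= c).
      { unfold c. apply Rmult_le_pos. nra. left; apply Rinv_0_lt_compat; lra. }
      assert (INR (off m K) <= c * (2 / eps)).
      { eapply Rle_trans; [exact Hcount|]. apply Rmult_le_compat_l; [lra|]. unfold Pr. lra. }
      assert (c * (2 / eps) <= 5 / (alpha ^ 2 * eps)).
      { replace (c * (2 / eps)) with ((2 * (c * alpha ^ 2)) / (alpha ^ 2 * eps)) by (field; lra).
        unfold Rdiv. apply Rmult_le_compat_r.
        left. apply Rinv_0_lt_compat. apply Rmult_lt_0_compat; nra. lra. }
      lra. }

  set (eta := fun n : nat => 16 / (5 * INR (m n))).
  set (om := fun n j : nat => (cos (2 * PI * INR j / INR (m n)), sin (2 * PI * INR j / INR (m n))) : C).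
  set (sg := fun x : R => (x - 1) / (x + 1)).
  set (cell := fun (n j : nat) (z : C) =>
     r1 * sg (B n / nu) < Cmod z /\ Cmod z < r1 * sg (B (S n)) /\
     Cmod (z - Cmod z * om n j) < eta n * Cmod z).
  set (W := fun (i : nat) (z : C) => (i = 0%nat /\ Cmod z < r1 * sg T) \/
     exists n j, (n < K)%nat /\ (j < m n)%nat /\ i = S (off m n + j) /\ cell n j z).
  assert (Hsg1 : forall x, 0 < x + 1 -> sg x < 1) by (intros; unfold sg; apply sig_lt1; lra).
  assert (Hdisk : forall i z, W i z -> Cmod z < r1).
  { intros i z [[_ Hz]|[n [j [Hn [_ [_ [_ [Hz _]]]]]]]].
    - assert (sg T < 1) by (apply Hsg1; lra). nra.
    - assert (h := HBn (S n) ltac:(lia)). assert (sg (B (S n)) < 1) by (apply Hsg1; lra). nra. }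
  exists W. split.
  - intros i Hi. split; [|split].
    +
      intros z Hz. destruct Hz as [[Ei Hce]|[n [j [Hn [Hj [Ei Hcell]]]]]].
      * apply (filter_imp (fun z => Cmod z < r1 * sg T)).
        { intros y Hy. left. split; auto. }
        apply (open_cmod_lt _ z Hce).
      * apply (filter_imp (cell n j)).
        { intros y Hy. right. exists n, j. auto. }
        assert (Ho : open (cell n j)).
        { unfold cell. apply open_and; [apply open_cmod_gt|apply open_and; [apply open_cmod_lt|apply open_ang]]. }
        apply (Ho z Hcell).
    + intros z Hz. unfold disk. apply (Hdisk i z Hz).
    + unfold diam_r.
      match goal with |- Rbar_le (Lub_Rbar ?E) _ => destruct (Lub_Rbar_correct E) as [_ Hlub] end.
      apply Hlub. intros x [z [w [Hz [Hw Ex]]]]. rewrite Ex. simpl.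
      assert (Hz1 := Hdisk i z Hz). assert (Hw1 := Hdisk i w Hw).
      apply (dist_le r1 alpha be z w Hr1 ltac:(lra) Hz1 Hw1 Hab).
      assert (Hz0 := Cmod_ge_0 z). assert (Hw0 := Cmod_ge_0 w).
      destruct Hz as [[Ei Hz]|[n [j [Hn [Hj [Ei Hz]]]]]];
      destruct Hw as [[Ei' Hw]|[n' [j' [Hn' [Hj' [Ei' Hw]]]]]]; try (subst i; discriminate).
      *
        apply (scale_ok r1 be (Cmod z) (Cmod w) (Cmod (z - w)) ((Cmod z / r1 + Cmod w / r1) ^ 2) Hr1).
        { assert (Ht := Cmod_triangle z (- w)). rewrite Cmod_opp in Ht.
          assert (H0 := Cmod_ge_0 (z - w)).
          replace (r1 ^ 2 * (Cmod z / r1 + Cmod w / r1) ^ 2) with ((Cmod z + Cmod w) ^ 2) by (field; lra).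
          unfold Cminus in *. nra. }
        unfold be. apply centre_real; try lra.
        apply Rdiv_le_0_compat; lra. apply Rdiv_le_0_compat; lra.
        apply Rmult_lt_reg_r with r1; [lra|]. unfold Rdiv at 1. rewrite Rmult_assoc, Rinv_l by lra.
        unfold sg in Hz. lra.
        apply Rmult_lt_reg_r with r1; [lra|]. unfold Rdiv at 1. rewrite Rmult_assoc, Rinv_l by lra.
        unfold sg in Hw. lra.
      *
        rewrite Ei in Ei'. injection Ei' as Ei'.
        destruct (off_inj m n n' j j' Hj Hj' Ei') as [<- <-].
        destruct Hz as [Hza [Hzb Hzc]]. destruct Hw as [Hwa [Hwb Hwc]].
        assert (hB := HBn n ltac:(lia)). assert (hBS := HBn (S n) ltac:(lia)).
        set (a0 := B n / nu) in *.
        assert (Ha0 : 1 < a0).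
        { unfold a0. apply Rmult_lt_reg_r with nu; [lra|].
          replace (B n / nu * nu) with (B n) by (field; lra). lra. }
        assert (Hsg0 : 0 < sg a0) by (unfold sg; apply Rdiv_lt_0_compat; lra).
        assert (HTa : T * a0 = B (S n)).
        { rewrite HBS. unfold a0, q. field. lra. }
        assert (Hzp : 0 < Cmod z) by nra. assert (Hwp : 0 < Cmod w) by nra.
        assert (CI := cell_ineq z w (om n j) (eta n) Hzp Hwp Hzc Hwc).
        destruct (Hm n Hn) as [[hm1 hm2] hm3]. destruct (HSn n Hn) as [hS1 hS2].
        assert (Hmpos : 0 < INR (m n)) by (apply lt_0_INR; lia).
        assert (Hetab : (2 * eta n) ^ 2 * Sn n ^ 2 <= (32 / 37) ^ 2 * be ^ 2).
        { replace ((2 * eta n) ^ 2 * Sn n ^ 2) with ((2 * eta n * Sn n) ^ 2) by ring.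
          replace ((32 / 37) ^ 2 * be ^ 2) with ((32 / 37 * be) ^ 2) by ring.
          apply pow_incr. split.
          - unfold eta. apply Rmult_le_pos; [|lra]. apply Rmult_le_pos; [lra|].
            apply Rlt_le, Rdiv_lt_0_compat; lra.
          - unfold eta. unfold A in hm1.
            replace (2 * (16 / (5 * INR (m n))) * Sn n) with (32 * Sn n / (5 * INR (m n))) by (field; lra).
            apply Rmult_le_reg_r with (5 * INR (m n)); [lra|].
            replace (32 * Sn n / (5 * INR (m n)) * (5 * INR (m n))) with (32 * Sn n) by (field; lra).
            assert (37 / 5 / be * Sn n * be = 37 / 5 * Sn n) by (field; lra).
            assert (37 / 5 * Sn n <= INR (m n) * be).
            { rewrite <- H. apply Rmult_le_compat_r; lra. }
            nra. }
        assert (HSnd : Sn n = (B (S n) ^ 2 - 1) / (4 * B (S n))) by reflexivity.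
        assert (Hs_bound : forall u, 0 <= u -> u < sg (B (S n)) -> u <= Sn n * (1 - u ^ 2)).
        { intros u hu1 hu2. unfold sg in hu2. apply sig_lt in hu2; [|lra].
          assert (K1 := ang_ineq (B (S n)) u ltac:(lra) hu1 ltac:(lra)).
          rewrite HSnd. apply Rmult_le_reg_l with (4 * B (S n)); [lra|].
          replace (4 * B (S n) * ((B (S n) ^ 2 - 1) / (4 * B (S n)) * (1 - u ^ 2)))
            with ((B (S n) ^ 2 - 1) * (1 - u ^ 2)) by (field; lra). lra. }
        apply (scale_ok r1 be (Cmod z) (Cmod w) (Cmod (z - w))
           ((Cmod z / r1 - Cmod w / r1) ^ 2 + (2 * eta n) ^ 2 * (Cmod z / r1 * (Cmod w / r1))) Hr1).
        { replace (r1 ^ 2 * ((Cmod z / r1 - Cmod w / r1) ^ 2 + (2 * eta n) ^ 2 * (Cmod z / r1 * (Cmod w / r1))))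
            with ((Cmod z - Cmod w) ^ 2 + (2 * eta n) ^ 2 * (Cmod z * Cmod w)) by (field; lra).
          exact CI. }
        assert (Hs1 := div_lt_l r1 _ _ Hr1 Hza). assert (Hs2 := div_lt_r r1 _ _ Hr1 Hzb).
        assert (Ht1 := div_lt_l r1 _ _ Hr1 Hwa). assert (Ht2 := div_lt_r r1 _ _ Hr1 Hwb).
        assert (Hsg1' : sg (B (S n)) < 1) by (apply Hsg1; lra).
        assert (0 <= Cmod z / r1) by (apply Rdiv_le_0_compat; lra).
        assert (0 <= Cmod w / r1) by (apply Rdiv_le_0_compat; lra).
        apply (cell_real T a0 _ _ (eta n) (Sn n) be); try lra.
        -- apply sig_gt; [lra|exact Hs1].
        -- rewrite HTa. apply sig_lt; [lra|exact Hs2].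
        -- apply sig_gt; [lra|exact Ht1].
        -- rewrite HTa. apply sig_lt; [lra|exact Ht2].
        -- apply Hs_bound; lra.
        -- apply Hs_bound; lra.
        -- reflexivity.
  - intros z Hz. unfold disk in Hz.
    assert (HN0 : (0 < N)%nat) by lia.
    destruct (Rlt_dec (Cmod z) (r1 * sg T)) as [Hc0|Hc0].
    { exists 0%nat. split; [lia|]. left; split; auto. }
    set (a := Cmod z) in *.
    assert (Ha0 : 0 <= a) by apply Cmod_ge_0.
    set (s := a / r1).
    assert (Hs0 : 0 <= s) by (apply Rdiv_le_0_compat; lra).
    assert (Has : a = r1 * s) by (unfold s; field; lra).
    assert (Hs1 : s * (1 + eps) < 1).
    { rewrite Hrr1 in Hz. rewrite Has in Hz.
      apply Rmult_lt_compat_r with (r := 1 + eps) in Hz; [|lra].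
      replace (r1 / (1 + eps) * (1 + eps)) with r1 in Hz by (field; lra). nra. }
    assert (Hsl1 : s < 1) by nra.
    assert (HsT : T * (1 - s) <= 1 + s).
    { destruct (Rle_dec (T * (1 - s)) (1 + s)) as [h|h]; auto.
      exfalso. apply Hc0. assert (h' : s < sg T) by (unfold sg; apply sig_lt_rev; lra).
      rewrite Has. apply Rmult_lt_compat_l; lra. }
    assert (HsP : 1 + s < Pr * (1 - s)).
    { unfold Pr. assert (E : (1 + 2 / eps) * (1 - s) - (1 + s) = 2 / eps * (1 - s - eps * s)) by (field; lra).
      assert (0 < 2 / eps * (1 - s - eps * s)) by (apply Rmult_lt_0_compat; [apply Rdiv_lt_0_compat|]; lra).
      lra. }
    assert (HK0 : (0 < K)%nat).
    { destruct (Nat.eq_dec K 0) as [E|E]; [|lia]. exfalso.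
      rewrite E in HK1. simpl in HK1. unfold Rdiv in HK1. rewrite Rinv_1, Rmult_1_r in HK1.
      nra. }
    set (P := (1 + s) / (1 - s)).
    assert (HPs : P * (1 - s) = 1 + s) by (unfold P; field; lra).
    assert (HB0P : B0 <= P).
    { apply Rmult_le_reg_r with (1 - s); [lra|]. rewrite HPs.
      assert (B0 <= T) by (unfold B0; exact HK1). nra. }
    assert (HPPr : P < B0 * q ^ K).
    { change (B0 * q ^ K) with (B K). rewrite HBK.
      apply Rmult_lt_reg_r with (1 - s); [lra|]. rewrite HPs. lra. }
    destruct (find_layer B0 q P K HB0pos Hq HB0P HPPr) as [n [Hn [HP1 HP2]]].
    change (B0 * q ^ n) with (B n) in HP1. change (B0 * q ^ S n) with (B (S n)) in HP2.
    assert (hB := HBn n HK0). assert (hBS := HBn (S n) HK0).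
    assert (Hlo : r1 * sg (B n / nu) < a).
    { rewrite Has. apply Rmult_lt_compat_l; [lra|]. unfold sg. apply sig_gt_rev.
      - assert (0 < B n / nu) by (apply Rdiv_lt_0_compat; lra). lra.
      - assert (B n / nu < B n).
        { apply Rmult_lt_reg_r with nu; [lra|]. replace (B n / nu * nu) with (B n) by (field; lra). nra. }
        assert (B n * (1 - s) <= 1 + s) by (rewrite <- HPs; apply Rmult_le_compat_r; lra).
        assert (B n / nu * (1 - s) < B n * (1 - s)) by (apply Rmult_lt_compat_r; lra).
        lra. }
    assert (Hhi : a < r1 * sg (B (S n))).
    { rewrite Has. apply Rmult_lt_compat_l; [lra|]. unfold sg. apply sig_lt_rev; [lra|].
      rewrite <- HPs. apply Rmult_lt_compat_r; lra. }
    assert (Hapos : 0 < a).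
    { assert (0 < sg (B n / nu)).
      { unfold sg. apply Rdiv_lt_0_compat.
        - apply Rlt_Rminus. apply Rmult_lt_reg_r with nu; [lra|].
          replace (B n / nu * nu) with (B n) by (field; lra). lra.
        - assert (0 < B n / nu) by (apply Rdiv_lt_0_compat; lra). lra. }
      nra. }
    destruct (Hm n Hn) as [_ Hm1].
    assert (Hxy : (fst z / a) ^ 2 + (snd z / a) ^ 2 = 1).
    { assert (E := Cmod_sq z). fold a in E. field_simplify; [|lra].
      rewrite <- E. field. lra. }
    destruct (angle_cover (m n) (fst z / a) (snd z / a) Hm1 Hxy) as [j [Hj Hang]].
    assert (Hmpos : 0 < INR (m n)) by (apply lt_0_INR; lia).
    assert (Hang2 : Cmod (z - a * om n j) < eta n * a).
    { set (th := 2 * PI * INR j / INR (m n)) in *.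
      assert (E : Cmod (z - a * om n j) ^ 2 =
        a ^ 2 * ((fst z / a - cos th) ^ 2 + (snd z / a - sin th) ^ 2)).
      { rewrite Cmod_sq. unfold om. fold th. destruct z as [z1 z2]. simpl. field. lra. }
      assert (H0 := Cmod_ge_0 (z - a * om n j)).
      assert (He : 0 < eta n) by (unfold eta; apply Rdiv_lt_0_compat; lra).
      assert (Hlt : Cmod (z - a * om n j) ^ 2 < (eta n * a) ^ 2).
      { rewrite E. unfold eta. replace ((16 / (5 * INR (m n)) * a) ^ 2) with (a ^ 2 * (16 / (5 * INR (m n))) ^ 2) by ring.
        apply Rmult_lt_compat_l; [nra|exact Hang]. }
      assert (0 < eta n * a) by nra. nra. }
    exists (S (off m n + j)). split.
    + assert (H1 := off_mono m (S n) K ltac:(lia)). simpl in H1. lia.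
    + right. exists n, j. repeat split; auto.
Qed.
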